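(* Let $k\geq3$ be an integer, let $N,M\geq0$ be integers, and let $a_1,\dots,a_N,b_1,\dots,b_M\in\{0,k-1\}$. Let $u=0a_1\cdots a_N$ and $v=(k-1)b_1\cdots b_M$ (words of lengths $N+1$ and $M+1$). For a word $w=w_1\cdots w_L$ over $\{0,k-1\}$ set $$I_w=\left[\sum_{n=1}^L\frac{w_n}{k^n}+\frac{1}{k^{L+1}},\ \sum_{n=1}^L\frac{w_n}{k^n}+\frac{k-1}{k^{L+1}}\right].$$ Then $d_k(a,b)$ takes the same value for all $(a,b)\in I_u\times I_v$.
   Context: $T_k:[0,1)\to[0,1)$ is $T_k(x)=kx\bmod1$; for $0\leq a<b\leq1$, $\mathcal{W}_k(a,b)=\{x\in[0,1)\ :\ T_k^n(x)\notin(a,b)\ \forall n\geq0\}$ and $d_k(a,b)$ is its Hausdorff dimension. (For such $u,v$ one has $I_u\subseteq[0,\frac1k)$ and $I_v\subseteq(\frac{k-1}{k},1)$.) *)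

(* Defs.v *)
From Stdlib Require Import Reals List.
From Coquelicot Require Import Coquelicot.
Open Scope R_scope.

Definition Tk (k : nat) (x : R) : R := frac_part (INR k * x).

Definition Wk (k : nat) (a b : R) : R -> Prop :=
  fun x => 0 <= x < 1 /\ forall n : nat, ~ (a < Nat.iter n (Tk k) x < b).

(* Diameter of a subset of R: sup |x - y|; the empty set has diameter 0
   (Lub_Rbar of the empty set is -oo, whose [real] is 0). Only used for
   sets whose Lub is finite (see [delta_cover]). *)
Definition diam_Rbar (U : R -> Prop) : Rbar :=
  Lub_Rbar (fun r => exists x y, U x /\ U y /\ r = Rabs (x - y)).
Definition diam (U : R -> Prop) : R := real (diam_Rbar U).

Definition dpow (d s : R) : R := if Rle_dec d 0 then 0 else Rpower d s.

Definition delta_cover (delta : R) (E : R -> Prop) (U : nat -> R -> Prop) : Prop :=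
  (forall x, E x -> exists i, U i x) /\
  (forall i, Rbar_le (diam_Rbar (U i)) (Finite delta)).

(* H^s_delta(E) = inf { sum_i diam(U_i)^s : (U_i) delta-cover of E }
   (covers with divergent sums contribute +oo, hence are irrelevant) *)
Definition Hdelta (s delta : R) (E : R -> Prop) : Rbar :=
  Glb_Rbar (fun x => exists U, delta_cover delta E U /\
                               is_series (fun i => dpow (diam (U i)) s) x).

Definition Hmeasure (s : R) (E : R -> Prop) : Rbar :=
  Lub_Rbar (fun y => exists delta, 0 < delta /\ Rbar_le (Finite y) (Hdelta s delta E)).

Definition hdim (E : R -> Prop) : Rbar :=
  Glb_Rbar (fun s => 0 < s /\ Hmeasure s E = Finite 0).

Definition dk (k : nat) (a b : R) : Rbar := hdim (Wk k a b).

(* value of a word w_1...w_L : sum_{n=1}^L w_n / k^n *)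
Fixpoint wordval (k : nat) (w : list nat) : R :=
  match w with
  | nil => 0
  | c :: w' => (INR c + wordval k w') / INR k
  end.

Definition in_Iw (k : nat) (w : list nat) (x : R) : Prop :=
  wordval k w + 1 / INR k ^ (S (length w)) <= x <=
  wordval k w + (INR k - 1) / INR k ^ (S (length w)).

(* Main.v *)
Require Import Defs.
From Stdlib Require Import Reals List Lra Lia Arith.
From Stdlib Require Import FunctionalExtensionality PropExtensionality.
From Coquelicot Require Import Coquelicot.
Open Scope R_scope.

Lemma frac_nat (z : R) (c : nat) : INR c <= z < INR c + 1 -> frac_part z = z - INR c.
Proof.
  intros [H1 H2]. unfold frac_part, Int_part.
  assert (E : (Z.of_nat c + 1)%Z = up z).
  { apply tech_up; rewrite plus_IZR, <- INR_IZR_INZ; simpl; lra. }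
  rewrite <- E. replace (Z.of_nat c + 1 - 1)%Z with (Z.of_nat c) by lia.
  rewrite <- INR_IZR_INZ. reflexivity.
Qed.

Lemma INR_km1 (k : nat) : (1 <= k)%nat -> INR (k - 1) = INR k - 1.
Proof. intros H. rewrite minus_INR by exact H. reflexivity. Qed.

Lemma kpos (k : nat) : (3 <= k)%nat -> 3 <= INR k.
Proof. intros H. apply le_INR in H. simpl in H. lra. Qed.

Lemma val_bound (k : nat) (w : list nat) : (3 <= k)%nat ->
  List.Forall (fun c => (c <= k - 1)%nat) w ->
  0 <= wordval k w <= 1 - 1 / INR k ^ length w.
Proof.
  intros Hk Hw. pose proof (kpos k Hk) as K.
  induction Hw as [|c w Hc Hw IH]; simpl.
  - lra.
  - assert (Hc' : INR c <= INR k - 1).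
    { rewrite <- INR_km1 by lia. apply le_INR; lia. }
    pose proof (pos_INR c).
    assert (P : 0 < INR k ^ length w) by (apply pow_lt; lra).
    split.
    + apply Rmult_le_pos; [lra | apply Rlt_le, Rinv_0_lt_compat; lra].
    + unfold Rdiv. 
      assert (E: 1 - 1 * / (INR k * INR k ^ length w) =
                 (INR k - 1 / INR k ^ length w) * / INR k) by (field; lra).
      rewrite E. apply Rmult_le_compat_r; [apply Rlt_le, Rinv_0_lt_compat; lra|].
      unfold Rdiv in IH. lra.
Qed.

Lemma top_bound (k : nat) (w : list nat) : (3 <= k)%nat ->
  List.Forall (fun c => (c <= k - 1)%nat) w ->
  wordval k w + (INR k - 1) / INR k ^ S (length w) < 1.
Proof.
  intros Hk Hw. pose proof (kpos k Hk) as K.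
  pose proof (val_bound k w Hk Hw) as [_ B].
  assert (P : 0 < INR k ^ length w) by (apply pow_lt; lra).
  simpl.
  assert (E : (INR k - 1) / (INR k * INR k ^ length w) =
    1 / INR k ^ length w - 1 / (INR k * INR k ^ length w)) by (field; lra).
  rewrite E.
  assert (0 < 1 / (INR k * INR k ^ length w)).
  { apply Rdiv_lt_0_compat; [lra| apply Rmult_lt_0_compat; lra]. }
  lra.
Qed.

Lemma iter_Iw (k : nat) (w : list nat) : (3 <= k)%nat ->
  List.Forall (fun c => (c <= k - 1)%nat) w -> forall y,
  in_Iw k w y ->
  1 / INR k <= Nat.iter (length w) (Tk k) y <= (INR k - 1) / INR k.
Proof.
  intros Hk Hw. pose proof (kpos k Hk) as K.
  induction Hw as [|c w Hc Hw IH]; intros y Hy.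
  - unfold in_Iw in Hy; simpl in *. rewrite !Rmult_1_r, !Rplus_0_l in Hy. exact Hy.
  - simpl length. rewrite Nat.iter_succ_r. apply IH.
    unfold in_Iw in Hy |- *. simpl in Hy.
    pose proof (top_bound k w Hk Hw) as TB.
    pose proof (val_bound k w Hk Hw) as [V0 _].
    assert (P : 0 < INR k ^ length w) by (apply pow_lt; lra).
    assert (P1 : 0 < INR k ^ S (length w)) by (apply pow_lt; lra).
    assert (Hky : INR c + wordval k w + 1 / INR k ^ S (length w) <= INR k * y <=
                  INR c + wordval k w + (INR k - 1) / INR k ^ S (length w)).
    { destruct Hy as [H1 H2]. simpl.
      assert (E1 : (INR c + wordval k w) / INR k + 1 / (INR k * (INR k * INR k ^ length w))
        = (INR c + wordval k w + 1 / (INR k * INR k ^ length w)) / INR k) by (field; lra).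
      assert (E2 : (INR c + wordval k w) / INR k + (INR k - 1) / (INR k * (INR k * INR k ^ length w))
        = (INR c + wordval k w + (INR k - 1) / (INR k * INR k ^ length w)) / INR k) by (field; lra).
      rewrite E1 in H1. rewrite E2 in H2.
      split.
      - apply (Rmult_le_reg_r (/ INR k)); [apply Rinv_0_lt_compat; lra|].
        replace (INR k * y * / INR k) with y by (field; lra). exact H1.
      - apply (Rmult_le_reg_r (/ INR k)); [apply Rinv_0_lt_compat; lra|].
        replace (INR k * y * / INR k) with y by (field; lra). exact H2. }
    unfold Tk. rewrite (frac_nat _ c).
    + lra.
    + assert (0 < 1 / INR k ^ S (length w)) by (apply Rdiv_lt_0_compat; lra). lra.
Qed.

Lemma dig_le (k : nat) (l : list nat) :
  List.Forall (fun c => c = 0%nat \/ c = (k - 1)%nat) l -> List.Forall (fun c => (c <= k - 1)%nat) l.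
Proof. intros H. eapply Forall_impl; [|exact H]. intros c [->| ->]; lia. Qed.

Lemma a_small (k : nat) (as_ : list nat) a : (3 <= k)%nat ->
  List.Forall (fun c => (c <= k - 1)%nat) as_ ->
  in_Iw k (0%nat :: as_) a -> a < 1 / INR k.
Proof.
  intros Hk Hw Ha. pose proof (kpos k Hk) as K.
  pose proof (top_bound k as_ Hk Hw) as TB.
  unfold in_Iw in Ha. simpl in Ha |- *.
  assert (P : 0 < INR k ^ length as_) by (apply pow_lt; lra).
  assert (E : (0 + wordval k as_) / INR k + (INR k - 1) / (INR k * (INR k * INR k ^ length as_))
     = (wordval k as_ + (INR k - 1) / (INR k * INR k ^ length as_)) / INR k) by (field; lra).
  simpl in TB. rewrite E in Ha.
  apply Rle_lt_trans with (1 := proj2 Ha).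
  unfold Rdiv. apply Rmult_lt_compat_r; [apply Rinv_0_lt_compat; lra|]. lra.
Qed.

Lemma b_big (k : nat) (bs : list nat) b : (3 <= k)%nat ->
  List.Forall (fun c => (c <= k - 1)%nat) bs ->
  in_Iw k ((k - 1)%nat :: bs) b -> (INR k - 1) / INR k < b.
Proof.
  intros Hk Hw Hb. pose proof (kpos k Hk) as K.
  pose proof (val_bound k bs Hk Hw) as [V0 _].
  unfold in_Iw in Hb. simpl in Hb.
  rewrite INR_km1 in Hb by lia.
  assert (P : 0 < INR k ^ length bs) by (apply pow_lt; lra).
  assert (0 < 1 / (INR k * (INR k * INR k ^ length bs))).
  { apply Rdiv_lt_0_compat; [lra|]. apply Rmult_lt_0_compat; [lra|]. apply Rmult_lt_0_compat; lra. }
  assert ((INR k - 1) / INR k <= (INR k - 1 + wordval k bs) / INR k).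
  { unfold Rdiv. apply Rmult_le_compat_r; [apply Rlt_le, Rinv_0_lt_compat; lra|]. lra. }
  lra.
Qed.

Lemma W_incl k as_ bs a b a' b' : (3 <= k)%nat ->
    List.Forall (fun c => (c <= k - 1)%nat) as_ ->
    List.Forall (fun c => (c <= k - 1)%nat) bs ->
      in_Iw k (0%nat :: as_) a -> in_Iw k ((k - 1)%nat :: bs) b ->
      in_Iw k (0%nat :: as_) a' -> in_Iw k ((k - 1)%nat :: bs) b' ->
      forall x, Wk k a b x -> Wk k a' b' x.
Proof.
  intros Hk Ha Hb Ia Ib Ia' Ib' x [Hx H]. split; [exact Hx|].
  intros n Hn.
  pose proof (a_small k as_ a Hk Ha Ia). pose proof (b_big k bs b Hk Hb Ib).
  set (y := Nat.iter n (Tk k) x) in *.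
  destruct (Rle_dec y a) as [Y1|Y1].
  - assert (Iy : in_Iw k (0%nat :: as_) y).
    { unfold in_Iw in *. lra. }
    assert (Fw : List.Forall (fun c => (c <= k - 1)%nat) (0%nat :: as_)) by (constructor; [lia|exact Ha]).
    pose proof (iter_Iw k _ Hk Fw y Iy) as G.
    apply (H (length (0%nat :: as_) + n)%nat). rewrite Nat.iter_add. fold y. lra.
  - destruct (Rle_dec b y) as [Y2|Y2].
    + assert (Iy : in_Iw k ((k-1)%nat :: bs) y).
      { unfold in_Iw in *. lra. }
      assert (Fw : List.Forall (fun c => (c <= k - 1)%nat) ((k-1)%nat :: bs)) by (constructor; [lia|exact Hb]).
      pose proof (iter_Iw k _ Hk Fw y Iy) as G.
      apply (H (length ((k-1)%nat :: bs) + n)%nat). rewrite Nat.iter_add. fold y. lra.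
    + apply (H n). fold y. lra.
Qed.

Theorem mainTheorem9 :
  forall (k : nat), (3 <= k)%nat ->
  forall (as_ bs : list nat),
    List.Forall (fun c => c = 0%nat \/ c = (k - 1)%nat) as_ ->
    List.Forall (fun c => c = 0%nat \/ c = (k - 1)%nat) bs ->
    forall a b a' b' : R,
      in_Iw k (0%nat :: as_) a -> in_Iw k ((k - 1)%nat :: bs) b ->
      in_Iw k (0%nat :: as_) a' -> in_Iw k ((k - 1)%nat :: bs) b' ->
      dk k a b = dk k a' b'.
Proof.
  intros k Hk as_ bs Ha Hb a b a' b' Ia Ib Ia' Ib'.
  apply dig_le in Ha. apply dig_le in Hb.
  unfold dk. f_equal. apply functional_extensionality. intros x.
  apply propositional_extensionality. split.
  - apply (W_incl k as_ bs a b a' b'); assumption.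
  - apply (W_incl k as_ bs a' b' a b); assumption.
Qed.
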